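(* Let $1\le r\le s\le t$ and let $u=ABCd$, $v=A'B'C'd'$ be vertices of $E3C(r,s,t)$ with $A\ne A'$, $B\ne B'$, $C=C'$ and $d\ne d'$. Then there exist $2r+2$ pairwise internally disjoint $u$–$v$ paths in $E3C(r,s,t)$, each of length at most $r+s+7$.
   Context: The exchanged 3-ary $n$-cube $E3C(r,s,t)$ ($r,s,t\ge1$, $n=r+s+t+1$): vertices are strings written $x=ABCd$ with $A\in\{0,1,2\}^r$, $B\in\{0,1,2\}^s$, $C\in\{0,1,2\}^t$, $d\in\{0,1,2\}$. Two distinct vertices $x=ABCd$, $y=A'B'C'd'$ are adjacent iff one of: (E0) $A=A',B=B',C=C'$ and $d\ne d'$; (E1) $d=d'=0$, $A=A'$, $B=B'$ and $C,C'$ differ in exactly one position; (E2) $d=d'=1$, $A=A'$, $C=C'$ and $B,B'$ differ in exactly one position; (E3) $d=d'=2$, $B=B'$, $C=C'$ and $A,A'$ differ in exactly one position. Paths are internally disjoint if they share no vertices other than their endpoints; length = number of edges. *)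

(* Defs.v *)
From mathcomp Require Import all_boot.
Set Implicit Arguments. Unset Strict Implicit. Unset Printing Implicit Defensive.

Definition word (n : nat) := {ffun 'I_n -> 'I_3}.

Definition vtx (r s t : nat) : finType := (word r * word s * word t * 'I_3)%type.

Definition vA r s t (x : vtx r s t) : word r := x.1.1.1.
Definition vB r s t (x : vtx r s t) : word s := x.1.1.2.
Definition vC r s t (x : vtx r s t) : word t := x.1.2.
Definition vd r s t (x : vtx r s t) : 'I_3 := x.2.

Definition diff1 n (a b : word n) : bool := #|[set i | a i != b i]| == 1.

Definition e3c_adj r s t : rel (vtx r s t) := fun x y =>
  (x != y) &&
  [|| [&& vA x == vA y, vB x == vB y, vC x == vC y & vd x != vd y],
      [&& (vd x == 0 :> nat), (vd y == 0 :> nat), vA x == vA y, vB x == vB y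
          & diff1 (vC x) (vC y)],
      [&& (vd x == 1 :> nat), (vd y == 1 :> nat), vA x == vA y, vC x == vC y
          & diff1 (vB x) (vB y)]
    | [&& (vd x == 2 :> nat), (vd y == 2 :> nat), vB x == vB y, vC x == vC y
          & diff1 (vA x) (vA y)]].

Definition is_path (T : eqType) (e : rel T) (u v : T) (p : seq T) : bool :=
  [&& p != [::], head u p == u, last u p == v, path e u (behead p) & uniq p].

Definition path_len (T : Type) (p : seq T) : nat := (size p).-1.

Definition int_disjoint (T : eqType) (u v : T) (p q : seq T) : Prop :=
  forall x, x \in p -> x \in q -> x = u \/ x = v.

(* Main.v *)
Require Import Defs.
From mathcomp Require Import all_boot zify.
Set Implicit Arguments. Unset Strict Implicit. Unset Printing Implicit Defensive.

Definition L0 : 'I_3 := @Ordinal 3 0 isT.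
Definition L1 : 'I_3 := @Ordinal 3 1 isT.
Definition L2 : 'I_3 := @Ordinal 3 2 isT.

Definition mk r s t (A : word r) (B : word s) (C : word t) (d : 'I_3) : vtx r s t :=
  (A, B, C, d).

Definition adjE r s t : rel (vtx r s t) := fun x y => (x == y) || e3c_adj x y.

Definition step1 n (W W' : word n) : Prop :=
  exists k : nat, forall q : 'I_n, val q != k -> W q = W' q.

Lemma step1_sym n (W W' : word n) : step1 W W' -> step1 W' W.
Proof. by case=> k Hk; exists k => q /Hk ->. Qed.

Lemma step1_refl n (W : word n) : step1 W W.
Proof. by exists 0. Qed.

Lemma step1_diff1 n (W W' : word n) : step1 W W' -> W != W' -> diff1 W W'.
Proof.
case=> k Hk neq.
have [q Hq] : exists q, W q != W' q.
  apply/existsP; apply: contraR neq => /existsPn H; apply/eqP/ffunP => q.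
  by have := H q; rewrite negbK => /eqP.
have vq : val q = k by apply/eqP; apply: contraR Hq => /Hk ->.
rewrite /diff1 (_ : [set i | W i != W' i] = [set q]) ?cards1 //.
apply/setP => q'; rewrite !inE; apply/idP/idP => [H|/eqP->//].
apply/eqP/val_inj; rewrite vq; apply/eqP; apply: contraR H => /Hk ->.
by rewrite eqxx.
Qed.

Lemma diff1_sym n (W W' : word n) : diff1 W W' = diff1 W' W.
Proof.
rewrite /diff1 (@eq_card _ _ [set i | W' i != W i]) // => i; by rewrite !inE eq_sym.
Qed.

Lemma adjE_sym r s t : symmetric (@adjE r s t).
Proof.
move=> x y; rewrite /adjE eq_sym; congr (_ || _).
rewrite /e3c_adj eq_sym; congr (_ && _).
rewrite (eq_sym (vA y)) (eq_sym (vB y)) (eq_sym (vC y)) (eq_sym (vd y)).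
rewrite (diff1_sym (vC y)) (diff1_sym (vB y)) (diff1_sym (vA y)).
by case: (vd x == 0 :> nat); case: (vd y == 0 :> nat); case: (vd x == 1 :> nat);
   case: (vd y == 1 :> nat); case: (vd x == 2 :> nat); case: (vd y == 2 :> nat);
   rewrite /= ?andbF ?andbT.
Qed.

Lemma adj_layer r s t A B C d d' : @adjE r s t (mk A B C d) (mk A B C d').
Proof.
rewrite /adjE; case: (eqVneq d d') => [->|nd]; first by rewrite eqxx.
apply/orP; right; rewrite /e3c_adj /mk /vA /vB /vC /vd /=.
rewrite !eqxx nd /=; apply/andP; split => //.
by apply/negP => /eqP [E]; rewrite E eqxx in nd.
Qed.

Lemma adj_A r s t (W W' : word r) B C : step1 W W' ->
  @adjE r s t (mk W B C L2) (mk W' B C L2).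
Proof.
move=> st; rewrite /adjE; case: (eqVneq W W') => [->|nW]; first by rewrite eqxx.
apply/orP; right; rewrite /e3c_adj /mk /vA /vB /vC /vd /=.
rewrite !eqxx /= (step1_diff1 st nW) !orbT andbT.
by apply/negP => /eqP [E]; rewrite E eqxx in nW.
Qed.

Lemma adj_B r s t A (W W' : word s) C : step1 W W' ->
  @adjE r s t (mk A W C L1) (mk A W' C L1).
Proof.
move=> st; rewrite /adjE; case: (eqVneq W W') => [->|nW]; first by rewrite eqxx.
apply/orP; right; rewrite /e3c_adj /mk /vA /vB /vC /vd /=.
rewrite !eqxx /= (step1_diff1 st nW) !orbT andbT.
by apply/negP => /eqP [E]; rewrite E eqxx in nW.
Qed.

Lemma adj_C r s t A B (W W' : word t) : step1 W W' ->
  @adjE r s t (mk A B W L0) (mk A B W' L0).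
Proof.
move=> st; rewrite /adjE; case: (eqVneq W W') => [->|nW]; first by rewrite eqxx.
apply/orP; right; rewrite /e3c_adj /mk /vA /vB /vC /vd /=.
rewrite !eqxx /= (step1_diff1 st nW) !orbT andbT.
by apply/negP => /eqP [E]; rewrite E eqxx in nW.
Qed.

Definition upd n (w : word n) (p : 'I_n) (x : 'I_3) : word n :=
  [ffun q => if q == p then x else w q].

Fixpoint pwt n (A0 A1 : word n) (ps : seq 'I_n) : seq (word n) :=
  if ps is p :: ps' then upd A0 p (A1 p) :: pwt (upd A0 p (A1 p)) A1 ps' else [::].

Definition pw n (A0 A1 : word n) ps := A0 :: pwt A0 A1 ps.

Lemma size_pwt n (A0 A1 : word n) ps : size (pwt A0 A1 ps) = size ps.
Proof. by elim: ps A0 => //= p ps IH A0; rewrite IH. Qed.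

Lemma step1_upd n (A0 : word n) p x : step1 A0 (upd A0 p x).
Proof.
by exists (val p) => q nq; rewrite /upd ffunE (_ : (q == p) = false) //; apply: contraNF nq => /eqP->.
Qed.

Lemma path_pwt n T (e : rel T) (f : word n -> T) (A0 A1 : word n) ps :
  (forall W W', step1 W W' -> e (f W) (f W')) ->
  path e (f A0) (map f (pwt A0 A1 ps)).
Proof.
move=> H; elim: ps A0 => //= p ps IH A0; rewrite IH andbT; apply: H; exact: step1_upd.
Qed.

Lemma last_pwt n (A0 A1 : word n) ps q :
  last A0 (pwt A0 A1 ps) q = if q \in ps then A1 q else A0 q.
Proof.
elim: ps A0 => //= p ps IH A0; rewrite IH inE /upd ffunE.
by case: (eqVneq q p) => [->|] //=; case: ifP.
Qed.

Lemma last_pwt_full n (A0 A1 : word n) ps :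
  (forall q, q \in ps) -> last A0 (pwt A0 A1 ps) = A1.
Proof. by move=> H; apply/ffunP => q; rewrite last_pwt H. Qed.

Lemma mem_pw n (A0 A1 : word n) ps W : W \in pw A0 A1 ps ->
  exists m, forall q, W q = if q \in take m ps then A1 q else A0 q.
Proof.
rewrite /pw; elim: ps A0 => [|p ps IH] A0 /=.
  by rewrite inE => /eqP->; exists 0.
rewrite inE => /orP[/eqP->|]; first by exists 0.
move/IH => [m Hm]; exists m.+1 => q; rewrite Hm /= inE /upd ffunE.
by case: (eqVneq q p) => [->|] //=; case: ifP.
Qed.

Lemma mem_take_enum n (q : 'I_n) m : (q \in take m (enum 'I_n)) = (q < m).
Proof.
rewrite -(mem_map val_inj) map_take val_enum_ord take_iota mem_iota /= add0n.
by rewrite leq_min ltn_ord andbT.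
Qed.

Lemma mem_pw_std n (A0 A1 : word n) W : W \in pw A0 A1 (enum 'I_n) ->
  exists m, forall q : 'I_n, W q = if q < m then A1 q else A0 q.
Proof. by case/mem_pw => m Hm; exists m => q; rewrite Hm mem_take_enum. Qed.

Lemma mem_pw_first n (A0 A1 : word n) q0 ps W : W \in pw A0 A1 (q0 :: ps) ->
  W = A0 \/ W q0 = A1 q0.
Proof.
case/mem_pw => [[|m] Hm]; [left; apply/ffunP => q; exact: Hm | right].
by rewrite Hm /= inE eqxx.
Qed.

Lemma mem_pw_last n (A0 A1 : word n) q0 ps W : q0 \notin ps ->
  W \in pw A0 A1 (ps ++ [:: q0]) ->
  W = last A0 (pwt A0 A1 (ps ++ [:: q0])) \/ W q0 = A0 q0.
Proof.
move=> nq /mem_pw [m Hm].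
case: (leqP m (size ps)) => hm.
  right; rewrite Hm takel_cat //; case: ifP => // /mem_take; by rewrite (negbTE nq).
left; apply/ffunP => q; rewrite Hm last_pwt take_oversize // size_cat /= addn1 //.
Qed.

Definition ps_first n k : seq 'I_n :=
  if [pick q : 'I_n | val q == k] is Some q then q :: rem q (enum 'I_n) else enum 'I_n.
Definition ps_last n k : seq 'I_n :=
  if [pick q : 'I_n | val q == k] is Some q then rem q (enum 'I_n) ++ [:: q] else enum 'I_n.

Lemma size_ps_first n k : size (ps_first n k) = n.
Proof.
rewrite /ps_first; case: pickP => [q _|_]; last by rewrite size_enum_ord.
by rewrite /= size_rem ?mem_enum // size_enum_ord; case: n q => [[]|].
Qed.

Lemma size_ps_last n k : size (ps_last n k) = n.
Proof.
rewrite /ps_last; case: pickP => [q _|_]; last by rewrite size_enum_ord.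
by rewrite size_cat /= size_rem ?mem_enum // size_enum_ord addn1; case: n q => [[]|].
Qed.

Lemma full_ps_first n k q : q \in ps_first n k.
Proof.
rewrite /ps_first; case: pickP => [q0 _|_]; last by rewrite mem_enum.
by rewrite inE mem_rem_uniq ?enum_uniq // inE mem_enum andbT; case: eqP.
Qed.

Lemma full_ps_last n k q : q \in ps_last n k.
Proof.
rewrite /ps_last; case: pickP => [q0 _|_]; last by rewrite mem_enum.
by rewrite mem_cat inE mem_rem_uniq ?enum_uniq // inE mem_enum andbT; case: eqP.
Qed.

Lemma mem_pw_psfirst n (A0 A1 : word n) k W : k < n ->
  W \in pw A0 A1 (ps_first n k) -> W = A0 \/ forall q : 'I_n, val q = k -> W q = A1 q.
Proof.
move=> hk; rewrite /ps_first; case: pickP => [q0 /eqP hq0|H]; last first.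
  by have := H (Ordinal hk); rewrite /= eqxx.
case/mem_pw_first => [->|Hq]; [by left | right => q hq].
by rewrite (_ : q = q0) //; apply: val_inj; rewrite hq hq0.
Qed.

Lemma mem_pw_pslast n (A0 A1 : word n) k W : k < n ->
  W \in pw A0 A1 (ps_last n k) -> W = A1 \/ forall q : 'I_n, val q = k -> W q = A0 q.
Proof.
move=> hk; rewrite /ps_last; case: pickP => [q0 /eqP hq0|H]; last first.
  by have := H (Ordinal hk); rewrite /= eqxx.
case/mem_pw_last; first by rewrite mem_rem_uniqF ?enum_uniq.
  move=> ->; left; apply: last_pwt_full => q.
  by rewrite mem_cat inE mem_rem_uniq ?enum_uniq // inE mem_enum andbT; case: eqP.
by move=> Hq; right => q hq; rewrite (_ : q = q0) //; apply: val_inj; rewrite hq hq0.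
Qed.

Definition sft (x : 'I_3) (b : bool) : 'I_3 := inord ((x + b.+1) %% 3).

Lemma sft_neq x b : sft x b != x.
Proof. by case: x => [[|[|[|m]]] Hm] //; case: b; apply/eqP => /(congr1 val); rewrite /= inordK. Qed.

Lemma sft_inj x b b' : sft x b = sft x b' -> b = b'.
Proof.
by case: x => [[|[|[|m]]] Hm] //; case: b; case: b' => // /(congr1 val); rewrite /= !inordK.
Qed.

Definition tg n (w : word n) (i : nat) : word n :=
  [ffun p => if val p == i./2 then sft (w p) (odd i) else w p].

Lemma tg_at n (w : word n) i (q : 'I_n) : val q = i./2 -> tg w i q = sft (w q) (odd i).
Proof. by move=> h; rewrite /tg ffunE h eqxx. Qed.

Lemma tg_off n (w : word n) i (q : 'I_n) : val q != i./2 -> tg w i q = w q.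
Proof. by move=> h; rewrite /tg ffunE (negbTE h). Qed.

Lemma half_odd_inj i i' : i./2 = i'./2 -> odd i = odd i' -> i = i'.
Proof. by move=> h1 h2; rewrite -(odd_double_half i) -(odd_double_half i') h1 h2. Qed.

Lemma tg_pos_inj n (w : word n) i i' (q : 'I_n) : val q = i'./2 ->
  tg w i q = tg w i' q -> i = i'.
Proof.
move=> hq; rewrite (tg_at _ hq) /tg ffunE; case: eqP => [hq'|hq'].
  by move/sft_inj => ho; apply: half_odd_inj => //; rewrite -hq' hq.
by move=> E; have := sft_neq (w q) (odd i'); rewrite -E eqxx.
Qed.

Lemma tg_inj n (w : word n) i i' : i./2 < n -> tg w i = tg w i' -> i = i'.
Proof.
move=> hi E; symmetry; apply: (@tg_pos_inj n w i' i (Ordinal hi)) => //.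
by rewrite E.
Qed.

Lemma tg_neq n (w : word n) i : i./2 < n -> tg w i != w.
Proof.
move=> hi; apply/eqP => E; have := congr1 (fun f : word n => f (Ordinal hi)) E.
by rewrite /= tg_at //; apply/eqP; exact: sft_neq.
Qed.

Lemma step1_tg n (w : word n) i : step1 w (tg w i).
Proof. by exists i./2 => q hq; rewrite tg_off. Qed.

Definition flat n (X X' : word n) i := [forall p : 'I_n, (i./2 <= p) ==> (X p == tg X' i p)].

Lemma flat_uniq n (X X' : word n) i i' : i./2 < n -> i'./2 < n ->
  flat X X' i -> flat X X' i' -> i = i'.
Proof.
move=> hi hi' /forallP F /forallP F'.
have side : forall j j' (hj' : j'./2 < n), j./2 < j'./2 ->
   (forall p : 'I_n, (j./2 <= p) ==> (X p == tg X' j p)) ->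
   (forall p : 'I_n, (j'./2 <= p) ==> (X p == tg X' j' p)) -> False.
  move=> j j' hj' lt G G'.
  have := G (Ordinal hj'); have := G' (Ordinal hj'); rewrite /= leqnn ltnW //= => /eqP ->.
  rewrite tg_at // tg_off /=; last by rewrite neq_ltn lt orbT.
  by rewrite (negbTE (sft_neq _ _)).
case: (ltngtP i./2 i'./2) => h.
- by case: (side i i' hi' h F F').
- by case: (side i' i hi h F' F).
have := F (Ordinal hi); have := F' (Ordinal hi); rewrite /= -h !leqnn /= => /eqP -> /eqP.
by move=> E; apply: (@tg_pos_inj n X' i i' (Ordinal hi)) => //=; rewrite E.
Qed.

Lemma flat_mix n (X X' W : word n) i : i./2 < n ->
  W \in pw X X' (enum 'I_n) -> W = tg X' i -> flat X X' i.
Proof.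
move=> hi /mem_pw_std [m Hm] E.
have hm : m <= i./2.
  rewrite leqNgt; apply/negP => lt.
  have := Hm (Ordinal hi); rewrite /= lt E tg_at //.
  by move/eqP; rewrite (negbTE (sft_neq _ _)).
apply/forallP => p; apply/implyP => hp; rewrite -E Hm.
by rewrite ltnNge (leq_trans hm hp).
Qed.

Definition good r s t (u v : vtx r s t) := exists (W : nat -> seq (vtx r s t))
  (R : nat -> vtx r s t -> Prop),
  (forall i, i < 2 * r + 2 -> [/\ path (@adjE r s t) u (W i), last u (W i) = v,
      size (W i) <= r + s + 7 & forall x, x \in W i -> [\/ x = u, x = v | R i x]]) /\
  (forall i j x, i < 2 * r + 2 -> j < 2 * r + 2 -> i != j -> R i x -> R j x -> False).

Lemma good_rev r s t (u v : vtx r s t) : u != v -> good u v -> good v u.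
Proof.
move=> nuv [W [R [HW HD]]]; exists (fun i => rev (belast u (W i))), R; split => // i hi.
have [P L S M] := HW i hi.
have Wn : W i != [::] by apply: contraNneq nuv => E; rewrite -L E.
split.
- rewrite -L rev_path; apply: sub_path P => x y; by rewrite adjE_sym.
- case E : (W i) Wn => [//|y p] _ /=; by rewrite rev_cons last_rcons.
- by rewrite size_rev size_belast.
- move=> x; rewrite mem_rev => /mem_belast; rewrite inE => /orP[/eqP->|/M]; first by constructor 2.
  by case=> H; [constructor 2|constructor 1|constructor 3].
Qed.

Lemma path_uniq_adj r s t (x : vtx r s t) p : path (@adjE r s t) x p -> uniq (x :: p) ->
  path (@e3c_adj r s t) x p.
Proof.
elim: p x => //= y p IH x /andP[hxy hp] /andP[nx up].
rewrite IH // andbT; move: hxy; rewrite /adjE => /orP[/eqP E|//].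
by move: nx; rewrite E inE eqxx.
Qed.

Lemma good_final r s t (u v : vtx r s t) : good u v ->
  exists P : 'I_(2 * r + 2) -> seq (vtx r s t),
    (forall i, is_path (@e3c_adj r s t) u v (P i)) /\
    (forall i, path_len (P i) <= r + s + 7) /\
    (forall i j, i != j -> int_disjoint u v (P i) (P j)).
Proof.
move=> [W [R [HW HD]]].
exists (fun i => u :: shorten u (W i)); split; [|split].
- move=> i; have [P L S M] := HW i (ltn_ord i).
  move: L; case: (shortenP P) => p' P' U' sub' L; rewrite /is_path /= eqxx L.
  by rewrite eqxx path_uniq_adj // -(andTb (u \notin p')) -andbA; exact: U'.
- move=> i; have [P L S M] := HW i (ltn_ord i).
  case: (shortenP P) => p' P' U' sub'; rewrite /path_len /=.
  apply: leq_trans S; apply: uniq_leq_size => //; by case/andP: U'.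
- move=> i j nij x; have [Pi Li Si Mi] := HW i (ltn_ord i); have [Pj Lj Sj Mj] := HW j (ltn_ord j).
  case: (shortenP Pi) => pi _ _ subi; case: (shortenP Pj) => pj _ _ subj.
  rewrite !inE => /orP[/eqP->|/subi/Mi]; first by left.
  case=> [->|->|Ri]; [by left|by right|].
  move=> /orP[/eqP->|/subj/Mj]; first by left.
  case=> [->|->|Rj]; [by left|by right|].
  by case: (HD i j x (ltn_ord i) (ltn_ord j) nij Ri Rj).
Qed.

Lemma pathA r s t (B : word s) (C : word t) (A0 A1 : word r) ps :
  path (@adjE r s t) (mk A0 B C L2) (map (fun W => mk W B C L2) (pwt A0 A1 ps)).
Proof. by apply: path_pwt => W W'; apply: adj_A. Qed.
Lemma pathB r s t (A : word r) (C : word t) (B0 B1 : word s) ps :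
  path (@adjE r s t) (mk A B0 C L1) (map (fun W => mk A W C L1) (pwt B0 B1 ps)).
Proof. by apply: path_pwt => W W'; apply: adj_B. Qed.

Lemma lastpA r s t (B : word s) (C : word t) (A0 A1 : word r) :
  last (mk A0 B C L2) (map (fun W => mk W B C L2) (pwt A0 A1 (enum 'I_r))) = @mk r s t A1 B C L2.
Proof. by rewrite (last_map (fun W => _)) last_pwt_full // => q; rewrite mem_enum. Qed.
Lemma lastpB r s t (A : word r) (C : word t) (B0 B1 : word s) :
  last (mk A B0 C L1) (map (fun W => mk A W C L1) (pwt B0 B1 (enum 'I_s))) = @mk r s t A B1 C L1.
Proof. by rewrite (last_map (fun W => _)) last_pwt_full // => q; rewrite mem_enum. Qed.


Definition At r (A A' : word r) i := if flat A A' i then A' else tg A' i.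

Lemma step1_tg' n (w : word n) i : step1 (tg w i) w.
Proof. apply: step1_sym; exact: step1_tg. Qed.
Lemma step1_At r (A A' : word r) i : step1 (At A A' i) A'.
Proof. by rewrite /At; case: ifP => _; [exact: step1_refl | exact: step1_tg']. Qed.

Definition W02 r s t (A A' : word r) (B B' : word s) (C : word t) (i : nat) : seq (vtx r s t) :=
 if i < 2 * r then
   [:: mk A B (tg C i) L0] ++ map (fun W => mk W B (tg C i) L2) (pw A (At A A' i) (enum 'I_r))
   ++ map (fun W => mk (At A A' i) W (tg C i) L1) (pw B B' (enum 'I_s))
   ++ [:: mk (At A A' i) B' (tg C i) L0; mk (At A A' i) B' C L0; mk (At A A' i) B' C L2; mk A' B' C L2]
 else if i == 2 * r then
   map (fun W => mk W B C L2) (pw A A' (enum 'I_r)) ++ map (fun W => mk A' W C L1) (pw B B' (enum 'I_s))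
   ++ [:: mk A' B' C L2]
 else map (fun W => mk A W C L1) (pw B B' (enum 'I_s)) ++ map (fun W => mk W B' C L2) (pw A A' (enum 'I_r)).

Lemma core02_walk r s t (A A' : word r) (B B' : word s) (C : word t) i :
  1 <= r -> r <= s -> s <= t -> i < 2 * r + 2 ->
  path (@adjE r s t) (mk A B C L0) (W02 A A' B B' C i) /\ last (mk A B C L0) (W02 A A' B B' C i) = mk A' B' C L2.
Proof.
move=> hr hrs hst hi; rewrite /W02; case: ifP => [hi2|_]; last case: ifP => _.
- rewrite /pw /= !cat_path !last_cat /= lastpA pathA /= !cat_path !last_cat /= lastpB pathB /=.
  rewrite !adj_layer /=.
  by rewrite (adj_C _ _ (step1_tg _ _)) (adj_C _ _ (step1_tg' _ _)) (adj_A _ _ (step1_At _ _ _)).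
- rewrite /pw /= !cat_path !last_cat /= lastpA pathA /= !cat_path !last_cat /= lastpB pathB /=.
  by rewrite !adj_layer.
- rewrite /pw /= !cat_path !last_cat /= lastpB pathB /= ?cat_path ?last_cat /= lastpA pathA /=.
  by rewrite !adj_layer.
Qed.


Lemma size_pw n (A0 A1 : word n) ps : size (pw A0 A1 ps) = (size ps).+1.
Proof. by rewrite /= size_pwt. Qed.

Lemma size_map_pw n T (f : word n -> T) (A0 A1 : word n) : size (map f (pw A0 A1 (enum 'I_n))) = n.+1.
Proof. by rewrite size_map size_pw size_enum_ord. Qed.

Lemma core02_size r s t (A A' : word r) (B B' : word s) (C : word t) i :
  size (W02 A A' B B' C i) <= r + s + 7.
Proof.
rewrite /W02; case: ifP => _; last case: ifP => _.
- rewrite !size_cat !size_map_pw /=; lia.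
- rewrite !size_cat !size_map_pw /=; lia.
- rewrite !size_cat !size_map_pw /=; lia.
Qed.

Definition R02 r s t (A A' : word r) (B B' : word s) (C : word t) (i : nat) (x : vtx r s t) : Prop :=
 if i < 2 * r then vC x = tg C i \/ (vC x = C /\ vB x = B' /\
    ((vd x = L0 /\ vA x = At A A' i) \/ (vd x = L2 /\ vA x = tg A' i /\ ~~ flat A A' i)))
 else if i == 2 * r then vC x = C /\ ((vd x = L2 /\ vB x = B) \/ (vd x = L1 /\ vA x = A'))
 else vC x = C /\ ((vd x = L1 /\ vA x = A) \/ (vd x = L2 /\ vB x = B' /\ vA x \in pw A A' (enum 'I_r))).

Lemma core02_mem r s t (A A' : word r) (B B' : word s) (C : word t) i x :
  x \in W02 A A' B B' C i -> [\/ x = mk A B C L0, x = mk A' B' C L2 | R02 A A' B B' C i x].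
Proof.
rewrite /W02 /R02; case: ifP => hi; last case: ifP => hi2.
- rewrite !mem_cat => /orP[|/orP[/mapP[W _ ->]|/orP[/mapP[W _ ->]|]]].
  + by rewrite mem_seq1 => /eqP->; constructor 3; left.
  + by constructor 3; left.
  + by constructor 3; left.
  rewrite !inE; case/or4P => /eqP->; [by constructor 3; left| by constructor 3; right; do 2!split=>//; left|
     |by constructor 2].
  rewrite /At; case: ifP => hf; first by constructor 2.
  by constructor 3; right; do 2!split=>//; right; split => //; rewrite hf.
- rewrite !mem_cat => /orP[/mapP[W _ ->]|/orP[/mapP[W _ ->]|]].
  + by constructor 3; split => //; left.
  + by constructor 3; split => //; right.
  + by rewrite mem_seq1 => /eqP->; constructor 2.
- rewrite mem_cat => /orP[/mapP[W _ ->]|/mapP[W hW ->]].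
  + by constructor 3; split => //; left.
  + by constructor 3; split => //; right.
Qed.

Lemma At_inj r (A A' : word r) i j : i < 2 * r -> j < 2 * r -> At A A' i = At A A' j -> i = j.
Proof.
move=> hi hj; have hi' : i./2 < r by rewrite ltn_half_double -mul2n.
have hj' : j./2 < r by rewrite ltn_half_double -mul2n.
rewrite /At; case: ifP => fi; case: ifP => fj.
- by move=> _; exact: (flat_uniq hi' hj' fi fj).
- by move=> E; have := tg_neq A' hj'; rewrite -E eqxx.
- by move=> E; have := tg_neq A' hi'; rewrite E eqxx.
- exact: tg_inj.
Qed.

Lemma half_lt i r : i < 2 * r -> i./2 < r.
Proof. by move=> h; rewrite ltn_half_double -mul2n. Qed.

Lemma L01 : L0 <> L1. Proof. by []. Qed.
Lemma L02 : L0 <> L2. Proof. by []. Qed.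
Lemma L12 : L1 <> L2. Proof. by []. Qed.

Lemma core02_disj r s t (A A' : word r) (B B' : word s) (C : word t) i j x :
  r <= s -> s <= t -> A != A' -> B != B' ->
  i < 2 * r + 2 -> j < 2 * r + 2 -> i != j ->
  R02 A A' B B' C i x -> R02 A A' B B' C j x -> False.
Proof.
move=> hrs hst nA nB hi hj nij.
have tgC : forall k, k < 2 * r -> tg C k <> C.
  move=> k hk E; have := tg_neq C (leq_trans (half_lt hk) (leq_trans hrs hst)).
  by rewrite E eqxx.
have tgA : forall k, k < 2 * r -> tg A' k <> A'.
  by move=> k hk E; have := tg_neq A' (half_lt hk); rewrite E eqxx.
have AtA : forall k, k < 2 * r -> At A A' k <> A' -> ~~ flat A A' k.
  by move=> k hk; rewrite /At; case: ifP.
rewrite /R02.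
case: (ltnP i (2 * r)) => hi2; case: (ltnP j (2 * r)) => hj2.
-
  case=> [Ei|[Ei [EBi Hi]]]; case=> [Ej|[Ej [EBj Hj]]].
  + by apply: (negP nij); apply/eqP; apply: (@tg_inj _ C _ _ (leq_trans (half_lt hi2) (leq_trans hrs hst))); rewrite -Ei -Ej.
  + by apply: (tgC i hi2); congruence.
  + by apply: (tgC j hj2); congruence.
  case: Hi => [[di ai]|[di [ai fi]]]; case: Hj => [[dj aj]|[dj [aj fj]]];
    rewrite ?di in dj; try by [].
  + by apply: (negP nij); apply/eqP; apply: (@At_inj _ A A' _ _ hi2 hj2); rewrite -ai -aj.
  + by apply: (negP nij); apply/eqP; apply: (@tg_inj _ A' _ _ (half_lt hi2)); rewrite -ai -aj.
- have tgi := tgC i hi2; have nAi := tgA i hi2; have nB' : B <> B' by apply/eqP.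
  have nA'' : A <> A' by apply/eqP.
  have l01 := L01; have l02 := L02; have l12 := L12.
  case: eqP => _.
  + case=> [Ei|[Ei [EBi [[di ai]|[di [ai fi]]]]]] [Ej [[dj bj]|[dj aj]]]; congruence.
  + case=> [Ei|[Ei [EBi [[di ai]|[di [ai fi]]]]]] [Ej [[dj aj]|[dj [bj aj]]]]; try congruence.
    have := flat_mix (half_lt hi2) aj; rewrite -ai => /(_ erefl); by rewrite (negbTE fi).
- have tgj := tgC j hj2; have nAj := tgA j hj2; have nB' : B <> B' by apply/eqP.
  have nA'' : A <> A' by apply/eqP.
  have l01 := L01; have l02 := L02; have l12 := L12.
  case: eqP => _ H.
  + case=> [Ej|[Ej [EBj [[dj aj]|[dj [aj fj]]]]]]; case: H => [Ei [[di bi]|[di ai]]]; congruence.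
  + case=> [Ej|[Ej [EBj [[dj aj]|[dj [aj fj]]]]]]; case: H => [Ei [[di ai]|[di [bi ai]]]]; try congruence.
    have := flat_mix (half_lt hj2) ai; rewrite -aj => /(_ erefl); by rewrite (negbTE fj).
- have nB' : B <> B' by apply/eqP.
  have nA'' : A <> A' by apply/eqP.
  have l01 := L01; have l02 := L02; have l12 := L12.
  case: eqP => ei; case: eqP => ej.
  + by move: nij; rewrite ei ej eqxx.
  + case=> [Ei [[di bi]|[di ai]]] [Ej [[dj aj]|[dj [bj aj]]]]; congruence.
  + case=> [Ei [[di aj]|[di [bj aj]]]] [Ej [[dj bi]|[dj ai]]]; congruence.
  + have : i = j by lia.
    by move=> E; move: nij; rewrite E eqxx.
Qed.


Lemma core02 r s t (A A' : word r) (B B' : word s) (C : word t) :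
  1 <= r -> r <= s -> s <= t -> A != A' -> B != B' ->
  good (mk A B C L0) (mk A' B' C L2).
Proof.
move=> hr hrs hst nA nB.
exists (W02 A A' B B' C), (R02 A A' B B' C); split.
- move=> i hi; have [P L] := core02_walk A A' B B' C hr hrs hst hi.
  split => //; [exact: core02_size | move=> x; exact: core02_mem].
- move=> i j x hi hj nij; exact: core02_disj.
Qed.

Definition W01 r s t (A A' : word r) (B B' : word s) (C : word t) (i : nat) : seq (vtx r s t) :=
 if i < 2 * r then
   [:: mk A B (tg C i) L0] ++ map (fun W => mk A W (tg C i) L1) (pw B (At B B' i) (enum 'I_s))
   ++ map (fun W => mk W (At B B' i) (tg C i) L2) (pw A A' (enum 'I_r))
   ++ [:: mk A' (At B B' i) (tg C i) L0; mk A' (At B B' i) C L0; mk A' (At B B' i) C L1; mk A' B' C L1]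
 else if i == 2 * r then
   map (fun W => mk W B C L2) (pw A A' (enum 'I_r)) ++ map (fun W => mk A' W C L1) (pw B B' (enum 'I_s))
 else map (fun W => mk A W C L1) (pw B B' (enum 'I_s)) ++ map (fun W => mk W B' C L2) (pw A A' (enum 'I_r))
   ++ [:: mk A' B' C L1].

Lemma core01_walk r s t (A A' : word r) (B B' : word s) (C : word t) i :
  1 <= r -> r <= s -> s <= t -> i < 2 * r + 2 ->
  path (@adjE r s t) (mk A B C L0) (W01 A A' B B' C i) /\ last (mk A B C L0) (W01 A A' B B' C i) = mk A' B' C L1.
Proof.
move=> hr hrs hst hi; rewrite /W01; case: ifP => [hi2|_]; last case: ifP => _.
- rewrite /pw /= !cat_path !last_cat /= lastpB pathB /= !cat_path !last_cat /= lastpA pathA /=.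
  rewrite !adj_layer /=.
  by rewrite (adj_C _ _ (step1_tg _ _)) (adj_C _ _ (step1_tg' _ _)) (adj_B _ _ (step1_At _ _ _)).
- rewrite /pw /= !cat_path !last_cat /= lastpA pathA /= ?cat_path ?last_cat /= lastpB pathB /=.
  by rewrite !adj_layer.
- rewrite /pw /= !cat_path !last_cat /= lastpB pathB /= !cat_path !last_cat /= lastpA pathA /=.
  by rewrite !adj_layer.
Qed.

Lemma core01_size r s t (A A' : word r) (B B' : word s) (C : word t) i :
  size (W01 A A' B B' C i) <= r + s + 7.
Proof.
rewrite /W01; case: ifP => _; last case: ifP => _.
- rewrite !size_cat !size_map_pw /=; lia.
- rewrite !size_cat !size_map_pw /=; lia.
- rewrite !size_cat !size_map_pw /=; lia.
Qed.

Definition R01 r s t (A A' : word r) (B B' : word s) (C : word t) (i : nat) (x : vtx r s t) : Prop :=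
 if i < 2 * r then vC x = tg C i \/ (vC x = C /\ vA x = A' /\
    ((vd x = L0 /\ vB x = At B B' i) \/ (vd x = L1 /\ vB x = tg B' i /\ ~~ flat B B' i)))
 else if i == 2 * r then vC x = C /\ ((vd x = L2 /\ vB x = B) \/ (vd x = L1 /\ vA x = A' /\ vB x \in pw B B' (enum 'I_s)))
 else vC x = C /\ ((vd x = L1 /\ vA x = A) \/ (vd x = L2 /\ vB x = B')).

Lemma core01_mem r s t (A A' : word r) (B B' : word s) (C : word t) i x :
  x \in W01 A A' B B' C i -> [\/ x = mk A B C L0, x = mk A' B' C L1 | R01 A A' B B' C i x].
Proof.
rewrite /W01 /R01; case: ifP => hi; last case: ifP => hi2.
- rewrite !mem_cat => /orP[|/orP[/mapP[W _ ->]|/orP[/mapP[W _ ->]|]]].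
  + by rewrite mem_seq1 => /eqP->; constructor 3; left.
  + by constructor 3; left.
  + by constructor 3; left.
  rewrite !inE; case/or4P => /eqP->; [by constructor 3; left| by constructor 3; right; do 2!split=>//; left|
     |by constructor 2].
  rewrite /At; case: ifP => hf; first by constructor 2.
  by constructor 3; right; do 2!split=>//; right; split => //; rewrite hf.
- rewrite !mem_cat => /orP[/mapP[W _ ->]|/mapP[W hW ->]].
  + by constructor 3; split => //; left.
  + by constructor 3; split => //; right.
- rewrite !mem_cat => /orP[/mapP[W _ ->]|/orP[/mapP[W _ ->]|]].
  + by constructor 3; split => //; left.
  + by constructor 3; split => //; right.
  + by rewrite mem_seq1 => /eqP->; constructor 2.
Qed.

Lemma core01_disj r s t (A A' : word r) (B B' : word s) (C : word t) i j x :
  r <= s -> s <= t -> A != A' -> B != B' ->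
  i < 2 * r + 2 -> j < 2 * r + 2 -> i != j ->
  R01 A A' B B' C i x -> R01 A A' B B' C j x -> False.
Proof.
move=> hrs hst nA nB hi hj nij.
have tgC : forall k, k < 2 * r -> tg C k <> C.
  move=> k hk E; have := tg_neq C (leq_trans (half_lt hk) (leq_trans hrs hst)).
  by rewrite E eqxx.
have hs : forall k, k < 2 * r -> k < 2 * s.
  by move=> k hk; apply: leq_trans hk _; rewrite leq_mul2l hrs orbT.
have tgB : forall k, k < 2 * r -> tg B' k <> B'.
  by move=> k hk E; have := tg_neq B' (leq_trans (half_lt hk) hrs); rewrite E eqxx.
rewrite /R01.
case: (ltnP i (2 * r)) => hi2; case: (ltnP j (2 * r)) => hj2.
- case=> [Ei|[Ei [EBi Hi]]]; case=> [Ej|[Ej [EBj Hj]]].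
  + by apply: (negP nij); apply/eqP; apply: (@tg_inj _ C _ _ (leq_trans (half_lt hi2) (leq_trans hrs hst))); rewrite -Ei -Ej.
  + by apply: (tgC i hi2); congruence.
  + by apply: (tgC j hj2); congruence.
  case: Hi => [[di ai]|[di [ai fi]]]; case: Hj => [[dj aj]|[dj [aj fj]]];
    rewrite ?di in dj; try by [].
  + by apply: (negP nij); apply/eqP; apply: (@At_inj _ B B' _ _ (hs _ hi2) (hs _ hj2)); rewrite -ai -aj.
  + by apply: (negP nij); apply/eqP; apply: (@tg_inj _ B' _ _ (leq_trans (half_lt hi2) hrs)); rewrite -ai -aj.
- have tgi := tgC i hi2; have nBi := tgB i hi2; have nB' : B <> B' by apply/eqP.
  have nA'' : A <> A' by apply/eqP.
  have l01 := L01; have l02 := L02; have l12 := L12.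
  case: eqP => _.
  + case=> [Ei|[Ei [EAi [[di ai]|[di [ai fi]]]]]] [Ej [[dj bj]|[dj [aj bj]]]]; try congruence.
    have := flat_mix (leq_trans (half_lt hi2) hrs) bj; rewrite -ai => /(_ erefl); by rewrite (negbTE fi).
  + case=> [Ei|[Ei [EAi [[di ai]|[di [ai fi]]]]]] [Ej [[dj aj]|[dj bj]]]; congruence.
- have tgj := tgC j hj2; have nBj := tgB j hj2; have nB' : B <> B' by apply/eqP.
  have nA'' : A <> A' by apply/eqP.
  have l01 := L01; have l02 := L02; have l12 := L12.
  case: eqP => _ H.
  + case=> [Ej|[Ej [EAj [[dj aj]|[dj [aj fj]]]]]]; case: H => [Ei [[di bi]|[di [ai bi]]]]; try congruence.
    have := flat_mix (leq_trans (half_lt hj2) hrs) bi; rewrite -aj => /(_ erefl); by rewrite (negbTE fj).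
  + case=> [Ej|[Ej [EAj [[dj aj]|[dj [aj fj]]]]]]; case: H => [Ei [[di ai]|[di bi]]]; congruence.
- have nB' : B <> B' by apply/eqP.
  have nA'' : A <> A' by apply/eqP.
  have l01 := L01; have l02 := L02; have l12 := L12.
  case: eqP => ei; case: eqP => ej.
  + by move: nij; rewrite ei ej eqxx.
  + case=> [Ei [[di bi]|[di [ai bi]]]] [Ej [[dj aj]|[dj bj]]]; congruence.
  + case=> [Ei [[di aj]|[di bj]]] [Ej [[dj bi]|[dj [ai bi]]]]; congruence.
  + have : i = j by lia.
    by move=> E; move: nij; rewrite E eqxx.
Qed.

Lemma core01 r s t (A A' : word r) (B B' : word s) (C : word t) :
  1 <= r -> r <= s -> s <= t -> A != A' -> B != B' ->
  good (mk A B C L0) (mk A' B' C L1).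
Proof.
move=> hr hrs hst nA nB.
exists (W01 A A' B B' C), (R01 A A' B B' C); split.
- move=> i hi; have [P L] := core01_walk A A' B B' C hr hrs hst hi.
  split => //; [exact: core01_size | move=> x; exact: core01_mem].
- move=> i j x hi hj nij; exact: core01_disj.
Qed.

Definition swp (N a b i : nat) : nat :=
  if (a < N) && (b < N) then (if i == a then b else if i == b then a else i) else i.

Lemma swp_lt N a b i : i < N -> swp N a b i < N.
Proof. by rewrite /swp; case: ifP => // /andP[ha hb]; case: ifP => _; [|case: ifP]. Qed.

Lemma swp_invol N a b i : swp N a b (swp N a b i) = i.
Proof.
rewrite /swp; case: ((a < N) && (b < N)) => //.
case: (eqVneq i a) => [->|nia].
  case: (eqVneq b a) => [->|nba]; by rewrite ?eqxx.
case: (eqVneq i b) => [->|nib]; first by rewrite ?eqxx.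
by rewrite ?(negbTE nia) ?(negbTE nib).
Qed.

Lemma swp_inj N a b i j : swp N a b i = swp N a b j -> i = j.
Proof. by move=> E; rewrite -(swp_invol N a b i) E swp_invol. Qed.

Definition findi (P : pred nat) N := find P (iota 0 N).

Lemma findi_spec (P : pred nat) N i : i < N -> P i -> findi P N < N /\ P (findi P N).
Proof.
move=> hi hP; have hs : has P (iota 0 N) by apply/hasP; exists i => //; rewrite mem_iota.
split; first by move: hs; rewrite has_find size_iota.
by have := nth_find 0 hs; rewrite nth_iota //; move: hs; rewrite has_find size_iota.
Qed.

Definition pi12 r s (A A' : word r) (B B' : word s) (i : nat) : nat :=
  swp (2 * r) (findi (fun k => tg B k == B') (2 * r)) (findi (fun k => tg A' k == A) (2 * r)) i.

Lemma pi12_lt r s (A A' : word r) (B B' : word s) i : i < 2 * r -> pi12 A A' B B' i < 2 * r.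
Proof. exact: swp_lt. Qed.

Lemma pi12_inj r s (A A' : word r) (B B' : word s) i j : pi12 A A' B B' i = pi12 A A' B B' j -> i = j.
Proof. exact: swp_inj. Qed.

Lemma pi12_key r s (A A' : word r) (B B' : word s) i j : r <= s -> i < 2 * r -> j < 2 * r ->
  tg B i = B' -> tg A' (pi12 A A' B B' j) = A -> i = j.
Proof.
move=> hrs hi hj hB hA.
have [tbl tbP] := findi_spec (P := fun k => tg B k == B') hi (introT eqP hB).
have [tal taP] := findi_spec (P := fun k => tg A' k == A) (pi12_lt A A' B B' hj) (introT eqP hA).
set tb := findi _ _ in tbl tbP; set ta := findi _ _ in tal taP.
have etb : tb = i.
  apply: (@tg_inj _ B _ _ (leq_trans (half_lt tbl) hrs)); by rewrite (eqP tbP) hB.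
have eta : ta = pi12 A A' B B' j.
  apply: (@tg_inj _ A' _ _ (half_lt tal)); by rewrite (eqP taP) hA.
have : pi12 A A' B B' tb = ta by rewrite /pi12 /swp -/tb -/ta tbl tal eqxx.
rewrite eta => /pi12_inj; by rewrite etb.
Qed.

Lemma lastpA' r s t (B : word s) (C : word t) (A0 A1 : word r) ps : (forall q, q \in ps) ->
  last (mk A0 B C L2) (map (fun W => mk W B C L2) (pwt A0 A1 ps)) = @mk r s t A1 B C L2.
Proof. by move=> H; rewrite (last_map (fun W => _)) last_pwt_full. Qed.
Lemma lastpB' r s t (A : word r) (C : word t) (B0 B1 : word s) ps : (forall q, q \in ps) ->
  last (mk A B0 C L1) (map (fun W => mk A W C L1) (pwt B0 B1 ps)) = @mk r s t A B1 C L1.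
Proof. by move=> H; rewrite (last_map (fun W => _)) last_pwt_full. Qed.

Lemma size_map_pw' n T (f : word n -> T) (A0 A1 : word n) ps : size (map f (pw A0 A1 ps)) = (size ps).+1.
Proof. by rewrite size_map size_pw. Qed.

Definition W12 r s t (A A' : word r) (B B' : word s) (C : word t) (i : nat) : seq (vtx r s t) :=
 if i < 2 * r then
   [:: mk A (tg B i) C L1]
   ++ map (fun W => mk W (tg B i) C L2) (pw A (tg A' (pi12 A A' B B' i)) (ps_first r (pi12 A A' B B' i)./2))
   ++ map (fun W => mk (tg A' (pi12 A A' B B' i)) W C L1) (pw (tg B i) B' (ps_last s i./2))
   ++ [:: mk (tg A' (pi12 A A' B B' i)) B' C L2; mk A' B' C L2]
 else if i == 2 * r then
   map (fun W => mk W B C L2) (pw A A' (enum 'I_r)) ++ map (fun W => mk A' W C L1) (pw B B' (enum 'I_s))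
   ++ [:: mk A' B' C L2]
 else [:: mk A B C L0; mk A B (tg C 0) L0]
   ++ map (fun W => mk A W (tg C 0) L1) (pw B B' (enum 'I_s))
   ++ map (fun W => mk W B' (tg C 0) L2) (pw A A' (enum 'I_r))
   ++ [:: mk A' B' (tg C 0) L0; mk A' B' C L0; mk A' B' C L2].

Lemma core12_walk r s t (A A' : word r) (B B' : word s) (C : word t) i :
  1 <= r -> r <= s -> s <= t -> i < 2 * r + 2 ->
  path (@adjE r s t) (mk A B C L1) (W12 A A' B B' C i) /\ last (mk A B C L1) (W12 A A' B B' C i) = mk A' B' C L2.
Proof.
move=> hr hrs hst hi; rewrite /W12; case: ifP => [hi2|_]; last case: ifP => _.
- rewrite /pw /= !cat_path !last_cat /= (lastpA' _ _ _ _ (@full_ps_first _ _)) pathA /=.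
  rewrite !cat_path !last_cat /= (lastpB' _ _ _ _ (@full_ps_last _ _)) pathB /=.
  rewrite !adj_layer /=.
  by rewrite (adj_B _ _ (step1_tg _ _)) (adj_A _ _ (step1_tg' _ _)).
- rewrite /pw /= !cat_path !last_cat /= lastpA pathA /= !cat_path !last_cat /= lastpB pathB /=.
  by rewrite !adj_layer.
- rewrite /pw /= !cat_path !last_cat /= lastpB pathB /= !cat_path !last_cat /= lastpA pathA /=.
  by rewrite !adj_layer (adj_C _ _ (step1_tg _ _)) (adj_C _ _ (step1_tg' _ _)).
Qed.

Lemma core12_size r s t (A A' : word r) (B B' : word s) (C : word t) i :
  size (W12 A A' B B' C i) <= r + s + 7.
Proof.
rewrite /W12; case: ifP => _; last case: ifP => _.
- rewrite !size_cat !size_map_pw' size_ps_first size_ps_last /=; lia.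
- rewrite !size_cat !size_map_pw /=; lia.
- rewrite !size_cat !size_map_pw /=; lia.
Qed.

Definition R12 r s t (A A' : word r) (B B' : word s) (C : word t) (i : nat) (x : vtx r s t) : Prop :=
 if i < 2 * r then vC x = C /\ (
    (vd x = L1 /\ vA x = A /\ vB x = tg B i)
  \/ (vd x = L2 /\ vB x = tg B i /\ (vA x = A \/ forall q : 'I_r, val q = (pi12 A A' B B' i)./2 ->
          vA x q = tg A' (pi12 A A' B B' i) q))
  \/ (vd x = L1 /\ vA x = tg A' (pi12 A A' B B' i) /\ (vB x = B' \/ forall q : 'I_s, val q = i./2 ->
          vB x q = tg B i q))
  \/ (vd x = L2 /\ vA x = tg A' (pi12 A A' B B' i) /\ vB x = B'))
 else if i == 2 * r then vC x = C /\ ((vd x = L2 /\ vB x = B) \/ (vd x = L1 /\ vA x = A'))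
 else vd x = L0 \/ vC x <> C.

Lemma core12_mem r s t (A A' : word r) (B B' : word s) (C : word t) i x :
  1 <= r -> r <= s -> s <= t ->
  x \in W12 A A' B B' C i -> [\/ x = mk A B C L1, x = mk A' B' C L2 | R12 A A' B B' C i x].
Proof.
move=> hr hrs hst.
rewrite /W12 /R12; case: ifP => hi; last case: ifP => hi2.
- have hpi := half_lt (pi12_lt A A' B B' hi).
  have hii : i./2 < s := leq_trans (half_lt hi) hrs.
  rewrite !mem_cat => /orP[|/orP[/mapP[W hW ->]|/orP[/mapP[W hW ->]|]]].
  + by rewrite mem_seq1 => /eqP->; constructor 3; split => //; left.
  + constructor 3; split => //; right; left; do 2!split => //.
    by case: (mem_pw_psfirst hpi hW) => [->|H]; [left|right].
  + constructor 3; split => //; right; right; left; do 2!split => //.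
    by case: (mem_pw_pslast hii hW) => [->|H]; [left|right].
  rewrite !inE => /orP[/eqP->|/eqP->]; last by constructor 2.
  by constructor 3; split => //; right; right; right.
- rewrite !mem_cat => /orP[/mapP[W _ ->]|/orP[/mapP[W _ ->]|]].
  + by constructor 3; split => //; left.
  + by constructor 3; split => //; right.
  + by rewrite mem_seq1 => /eqP->; constructor 2.
- have h0 : tg C 0 <> C.
    by move=> E; have := @tg_neq _ C 0 (leq_trans hr (leq_trans hrs hst)); rewrite E eqxx.
  rewrite !mem_cat => /orP[|/orP[/mapP[W _ ->]|/orP[/mapP[W _ ->]|]]].
  + by rewrite !inE => /orP[/eqP->|/eqP->]; constructor 3; left.
  + by constructor 3; right.
  + by constructor 3; right.
  rewrite !inE => /or3P[/eqP->|/eqP->|/eqP->]; [by constructor 3; left|by constructor 3; left|].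
  by constructor 2.
Qed.

Lemma help_ac r s (A A' : word r) (B B' : word s) i j (Ax : word r) (Bx : word s) :
  r <= s -> i < 2 * r -> j < 2 * r ->
  Ax = A -> Bx = tg B i -> Ax = tg A' (pi12 A A' B B' j) ->
  (Bx = B' \/ forall q : 'I_s, val q = j./2 -> Bx q = tg B j q) -> i = j.
Proof.
move=> hrs hi hj -> -> E [H|H].
- exact: (pi12_key hrs hi hj H (esym E)).
- have hj' : j./2 < s := leq_trans (half_lt hj) hrs.
  by apply: (@tg_pos_inj _ B i j (Ordinal hj')) => //; apply: H.
Qed.

Lemma help_bd r s (A A' : word r) (B B' : word s) i j (Ax : word r) (Bx : word s) :
  r <= s -> i < 2 * r -> j < 2 * r ->
  Bx = tg B i ->
  (Ax = A \/ forall q : 'I_r, val q = (pi12 A A' B B' i)./2 -> Ax q = tg A' (pi12 A A' B B' i) q) ->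
  Ax = tg A' (pi12 A A' B B' j) -> Bx = B' -> i = j.
Proof.
move=> hrs hi hj EB [H|H] EA EB'.
- by apply: (@pi12_key r s A A' B B' i j hrs hi hj); congruence.
- have hp := half_lt (pi12_lt A A' B B' hi).
  apply: (@pi12_inj _ _ A A' B B'); symmetry.
  by apply: (@tg_pos_inj _ A' _ _ (Ordinal hp)) => //; rewrite -EA H.
Qed.

Lemma core12_disj r s t (A A' : word r) (B B' : word s) (C : word t) i j x :
  r <= s -> s <= t -> A != A' -> B != B' ->
  i < 2 * r + 2 -> j < 2 * r + 2 -> i != j ->
  R12 A A' B B' C i x -> R12 A A' B B' C j x -> False.
Proof.
move=> hrs hst nA nB hi hj nij.
have nB' : B <> B' by apply/eqP.
have nA'' : A <> A' by apply/eqP.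
have l01 := L01; have l02 := L02; have l12 := L12.
have tgB : forall k, k < 2 * r -> tg B k <> B.
  by move=> k hk E; have := tg_neq B (leq_trans (half_lt hk) hrs); rewrite E eqxx.
have tgA : forall k, k < 2 * r -> tg A' (pi12 A A' B B' k) <> A'.
  move=> k hk E; have := tg_neq A' (half_lt (pi12_lt A A' B B' hk)); by rewrite E eqxx.
have nij' : i <> j by apply/eqP.
rewrite /R12.
case: (ltnP i (2 * r)) => hi2; case: (ltnP j (2 * r)) => hj2.
- case=> _ [[di [ai bi]]|[[di [bi ai]]|[[di [ai bi]]|[di [ai bi]]]]];
  case=> _ [[dj [aj bj]]|[[dj [bj aj]]|[[dj [aj bj]]|[dj [aj bj]]]]]; try congruence.
  + by apply: nij'; apply: (@tg_inj _ B _ _ (leq_trans (half_lt hi2) hrs)); congruence.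
  + by apply: nij'; apply: (help_ac hrs hi2 hj2 ai bi aj); exact: bj.
  + by apply: nij'; apply: (@tg_inj _ B _ _ (leq_trans (half_lt hi2) hrs)); congruence.
  + by apply: nij'; apply: (help_bd hrs hi2 hj2 bi ai aj bj).
  + by apply: nij'; symmetry; apply: (help_ac hrs hj2 hi2 aj bj ai); exact: bi.
  + by apply: nij'; apply: (@pi12_inj _ _ A A' B B'); apply: (@tg_inj _ A' _ _ (half_lt (pi12_lt A A' B B' hi2))); congruence.
  + by apply: nij'; symmetry; apply: (help_bd hrs hj2 hi2 bj aj ai bi).
  + by apply: nij'; apply: (@pi12_inj _ _ A A' B B'); apply: (@tg_inj _ A' _ _ (half_lt (pi12_lt A A' B B' hi2))); congruence.
- have ti := tgB i hi2; have ta := tgA i hi2; case: eqP => _.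
  + case=> ci [[di [ai bi]]|[[di [bi ai]]|[[di [ai bi]]|[di [ai bi]]]]];
    case=> cj [[dj bj]|[dj aj]]; congruence.
  + case=> ci [[di [ai bi]]|[[di [bi ai]]|[[di [ai bi]]|[di [ai bi]]]]];
    case=> [dj|cj]; congruence.
- have tj := tgB j hj2; have taj := tgA j hj2; case: eqP => _ H.
  + case: H => ci [[di bi]|[di ai]];
    case=> cj [[dj [aj bj]]|[[dj [bj aj]]|[[dj [aj bj]]|[dj [aj bj]]]]]; congruence.
  + case: H => [di|ci];
    case=> cj [[dj [aj bj]]|[[dj [bj aj]]|[[dj [aj bj]]|[dj [aj bj]]]]]; congruence.
- case: eqP => ei; case: eqP => ej.
  + by move: nij; rewrite ei ej eqxx.
  + case=> ci [[di bi]|[di ai]] [dj|cj]; congruence.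
  + case=> [di|ci] [cj [[dj bj]|[dj aj]]]; congruence.
  + have : i = j by lia.
    by move=> E; move: nij; rewrite E eqxx.
Qed.

Lemma core12 r s t (A A' : word r) (B B' : word s) (C : word t) :
  1 <= r -> r <= s -> s <= t -> A != A' -> B != B' ->
  good (mk A B C L1) (mk A' B' C L2).
Proof.
move=> hr hrs hst nA nB.
exists (W12 A A' B B' C), (R12 A A' B B' C); split.
- move=> i hi; have [P L] := core12_walk A A' B B' C hr hrs hst hi.
  split => //; [exact: core12_size | move=> x; exact: core12_mem].
- move=> i j x hi hj nij; exact: core12_disj.
Qed.

Lemma ord3_cases (d : 'I_3) : [\/ d = L0, d = L1 | d = L2].
Proof.
case: d => [[|[|[|m]]] hm] //.
- by constructor 1; apply: val_inj.
- by constructor 2; apply: val_inj.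
- by constructor 3; apply: val_inj.
Qed.

Unset Implicit Arguments.
Theorem lemma20 (r s t : nat) (u v : vtx r s t) :
  1 <= r -> r <= s -> s <= t ->
  vA u != vA v -> vB u != vB v -> vC u = vC v -> vd u != vd v ->
  exists P : 'I_(2 * r + 2) -> seq (vtx r s t),
    (forall i, is_path (@e3c_adj r s t) u v (P i)) /\
    (forall i, path_len (P i) <= r + s + 7) /\
    (forall i j, i != j -> int_disjoint u v (P i) (P j)).
Proof.
move=> hr hrs hst H1 H2 H3 H4; have G := @good_final r s t u v. apply: G. move: H1 H2 H3 H4.
case: u => [[[A B] C] d]; case: v => [[[A' B'] C'] d'].
rewrite /vA /vB /vC /vd /= => nA nB eC nd; subst C'.
have nA' : A' != A by rewrite eq_sym.
have nB' : B' != B by rewrite eq_sym.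
have nuv : forall d1 d2, d1 != d2 -> (A', B', C, d2) != (A, B, C, d1) :> vtx r s t.
  by move=> d1 d2 n12; apply/negP => /eqP [_ _ E]; move: n12; rewrite E eqxx.
case: (ord3_cases d) => E; case: (ord3_cases d') => E'; move: nd; rewrite E E' => nd;
  try by rewrite eqxx in nd.
- apply: (@core01 r s t A A' B B' C hr hrs hst nA nB).
- exact: (@core02 r s t A A' B B' C hr hrs hst nA nB).
- apply: good_rev (nuv _ _ nd) _; exact: (@core01 r s t A' A B' B C hr hrs hst nA' nB').
- exact: (@core12 r s t A A' B B' C hr hrs hst nA nB).
- apply: good_rev (nuv _ _ nd) _; exact: (@core02 r s t A' A B' B C hr hrs hst nA' nB').
- apply: good_rev (nuv _ _ nd) _; exact: (@core12 r s t A' A B' B C hr hrs hst nA' nB').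
Qed.
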